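(* Let $\mathcal{H}$ be an infinite-dimensional complex Hilbert space. (a) Every finitely additive probability measure $\mu$ on $\mathcal{P}_{\mathbb{R}}(\mathcal{H})$ vanishes on all (projections onto) finite-dimensional real subspaces of $\mathcal{H}$. (b) If $\mathcal{H}$ is separable, there exists no probability measure on $\mathcal{P}_{\mathbb{R}}(\mathcal{H})$.
   Context: $\mathcal{P}_{\mathbb{R}}(\mathcal{H})$ is the set of real orthogonal projections onto closed real linear subspaces of $\mathcal{H}$, ordered by inclusion of ranges, with $0,1$, join = projection onto closed real span, meet = projection onto intersection, and involution $E'=1+iEi$, the projection onto the symplectic complement $\{\xi:\mathrm{Im}\langle\xi,h\rangle=0\ \forall h\in E\mathcal{H}\}$. Elements $E,F$ are separated if $E\le F'$. A probability measure on $\mathcal{P}_{\mathbb{R}}(\mathcal{H})$ is a map $\mu$ into $[0,1]$ with $\mu(0)=0$, $\mu(1)=1$, $E\le F\Rightarrow\mu(E)\le\mu(F)$, and $\mu(\bigvee_{E\in\mathcal{Q}_0}E)=\sum_{E\in\mathcal{Q}_0}\mu(E)$ for every countable subset $\mathcal{Q}_0$ of pairwise separated elements; it is finitely additive if this last identity is only required for finite such $\mathcal{Q}_0$. *)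

(* Defs.v *)
From mathcomp Require Import all_boot all_order all_algebra.
From mathcomp Require Import boolp classical_sets cardinality reals constructive_ereal ereal esum.
From mathcomp.real_closed Require Export complex.

Set Implicit Arguments.
Unset Strict Implicit.
Unset Printing Implicit Defensive.
Import Order.TTheory GRing.Theory Num.Theory.
Local Open Scope ring_scope.
Local Open Scope classical_set_scope.
Local Open Scope complex_scope.

Section Hilbert.
Variables (R : realType) (H : lmodType R[i]) (ip : H -> H -> R[i]).

Definition is_inner_product : Prop :=
  [/\ forall (a : R[i]) (x y z : H), ip (a *: x + y) z = a * ip x z + ip y z,
      forall x y : H, ip y x = (ip x y)^*,
      forall x : H, complex.Im (ip x x) = 0 /\ 0 <= complex.Re (ip x x)
    & forall x : H, ip x x = 0 -> x = 0].

Definition hnorm (x : H) : R := Num.sqrt (complex.Re (ip x x)).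

Definition hcauchy (u : nat -> H) : Prop :=
  forall e : R, 0 < e -> exists N : nat, forall m n : nat,
    (N <= m)%N -> (N <= n)%N -> hnorm (u m - u n) < e.

Definition hconverges (u : nat -> H) (x : H) : Prop :=
  forall e : R, 0 < e -> exists N : nat, forall n : nat,
    (N <= n)%N -> hnorm (u n - x) < e.

Definition hcomplete : Prop :=
  forall u : nat -> H, hcauchy u -> exists x : H, hconverges u x.

Definition is_hilbert : Prop := is_inner_product /\ hcomplete.

Definition infinite_dimensional : Prop :=
  forall n : nat, exists v : 'I_n -> H, forall c : 'I_n -> R[i],
    \sum_(i < n) c i *: v i = 0 -> forall i, c i = 0.

Definition hseparable : Prop :=
  exists d : nat -> H, forall (x : H) (e : R), 0 < e -> exists k : nat, hnorm (x - d k) < e.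

(* closed real-linear subspaces (= ranges of the real orthogonal projections in P_R(H)) *)
Definition real_subspace (E : set H) : Prop :=
  [/\ E 0, forall x y, E x -> E y -> E (x + y)
    & forall (r : R) x, E x -> E (r%:C *: x)].

Definition hclosed (E : set H) : Prop :=
  forall (u : nat -> H) (x : H), (forall n, E (u n)) -> hconverges u x -> E x.

Definition closed_real_subspace (E : set H) : Prop := real_subspace E /\ hclosed E.

Definition real_span (A : set H) : set H :=
  [set x | exists (n : nat) (c : 'I_n -> R) (v : 'I_n -> H),
     (forall i, A (v i)) /\ x = \sum_(i < n) (c i)%:C *: v i].

Definition hclosure (A : set H) : set H :=
  [set x | forall e : R, 0 < e -> exists y, A y /\ hnorm (x - y) < e].

(* join of a family of elements: projection onto the closed real span of their ranges *)
Definition pjoin (Q : set (set H)) : set H :=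
  hclosure (real_span (\bigcup_(E in Q) E)).

(* involution E' = 1 + iEi: projection onto the symplectic complement *)
Definition symp_compl (E : set H) : set H :=
  [set xi | forall h, E h -> complex.Im (ip xi h) = 0].

Definition separated (E F : set H) : Prop := E `<=` symp_compl F.

Definition pairwise_separated (Q : set (set H)) : Prop :=
  forall E F, Q E -> Q F -> E <> F -> separated E F.

Definition finite_dim_real_subspace (S : set H) : Prop :=
  exists (n : nat) (v : 'I_n -> H), S = real_span (range v).

(* mu is defined on P_R(H), represented by the closed real subspaces; its values on
   other sets are irrelevant. [countably] selects countable vs finite families. *)
Definition gen_prob_measure (countably : bool) (mu : set H -> R) : Prop :=
  [/\ forall E, closed_real_subspace E -> 0 <= mu E <= 1,
      mu [set 0] = 0,
      mu [set: H] = 1,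
      forall E F, closed_real_subspace E -> closed_real_subspace F ->
        E `<=` F -> mu E <= mu F
    & forall Q : set (set H),
        Q `<=` closed_real_subspace ->
        (if countably then is_true (countable Q) else finite_set Q) ->
        pairwise_separated Q ->
        ((mu (pjoin Q))%:E = \esum_(E in Q) (mu E)%:E)%E].

Definition prob_measure (mu : set H -> R) : Prop := gen_prob_measure true mu.
Definition fin_add_prob_measure (mu : set H -> R) : Prop := gen_prob_measure false mu.

End Hilbert.

(* Main.v *)
Require Import Defs.
From mathcomp Require Import all_boot all_order all_algebra.
From mathcomp Require Import boolp classical_sets cardinality reals constructive_ereal ereal esum.
From mathcomp.real_closed Require Import complex.
From mathcomp Require Import ring lra fsbigop.
Set Implicit Arguments.
Unset Strict Implicit.
Unset Printing Implicit Defensive.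
Import Order.TTheory GRing.Theory Num.Theory.
Local Open Scope ring_scope.
Local Open Scope classical_set_scope.
Local Open Scope complex_scope.

Lemma zid (V : zmodType) (y a b c d : V) : y + a + b = y + c + d + (a - c + (b - d)).
Proof. by rewrite addrACA -[y + c + _]addrA (addrCA c) subrr addr0 (addrCA d) subrr addr0. Qed.

Section Basics.
Variables (R : realType) (H : lmodType R[i]) (ip : H -> H -> R[i]).
Hypothesis hip : is_inner_product ip.
Local Notation iC := (Complex (0:R) 1).

Lemma ipDl x y z : ip (x + y) z = ip x z + ip y z.
Proof. by case: hip => h _ _ _; rewrite -{1}[x]scale1r h mul1r. Qed.

Lemma ip0l z : ip 0 z = 0.
Proof.
have h := ipDl 0 0 z; rewrite addr0 in h.
by apply: (addrI (ip 0 z)); rewrite -h addr0.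
Qed.

Lemma ipZl a x z : ip (a *: x) z = a * ip x z.
Proof. by case: hip => h _ _ _; rewrite -[a *: x]addr0 h ip0l addr0. Qed.

Lemma ipJ x y : ip y x = (ip x y)^*.
Proof. by case: hip. Qed.

Lemma ipNl x z : ip (- x) z = - ip x z.
Proof. by rewrite -scaleN1r ipZl mulN1r. Qed.

Lemma ipDr z x y : ip z (x + y) = ip z x + ip z y.
Proof.
rewrite [LHS]ipJ ipDl (ipJ x z) (ipJ y z).
by case: (ip x z) => a b; case: (ip y z) => c d /=; congr Complex; ring.
Qed.

Lemma ipZr z a x : ip z (a *: x) = a^* * ip z x.
Proof.
rewrite [LHS]ipJ ipZl (ipJ x z).
by case: a => a b; case: (ip x z) => c d /=; congr Complex; ring.
Qed.

Lemma ip0r z : ip z 0 = 0.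
Proof. by rewrite ipJ ip0l conjc0. Qed.

Lemma ipNr x z : ip z (- x) = - ip z x.
Proof.
rewrite [LHS]ipJ ipNl (ipJ x z).
by case: (ip x z) => c d /=; congr Complex; ring.
Qed.

Definition rip x y := complex.Re (ip x y).

Lemma ripDl x y z : rip (x + y) z = rip x z + rip y z.
Proof. by rewrite /rip ipDl; case: (ip x z) => a b; case: (ip y z). Qed.
Lemma ripDr z x y : rip z (x + y) = rip z x + rip z y.
Proof. by rewrite /rip ipDr; case: (ip z x) => a b; case: (ip z y). Qed.
Lemma ripNl x z : rip (- x) z = - rip x z.
Proof. by rewrite /rip ipNl; case: (ip x z). Qed.
Lemma ripNr x z : rip z (- x) = - rip z x.
Proof. by rewrite /rip ipNr; case: (ip z x). Qed.
Lemma ripZl (r : R) x z : rip (r%:C *: x) z = r * rip x z.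
Proof. by rewrite /rip ipZl; case: (ip x z) => a b /=; rewrite mul0r subr0. Qed.
Lemma ripZr (r : R) x z : rip z (r%:C *: x) = r * rip z x.
Proof. by rewrite /rip ipZr; case: (ip z x) => a b /=; rewrite oppr0 mul0r subr0. Qed.
Lemma ripC x y : rip x y = rip y x.
Proof. by rewrite /rip (ipJ x y); case: (ip x y). Qed.
Lemma rip0l z : rip 0 z = 0.
Proof. by rewrite /rip ip0l. Qed.
Lemma rip0r z : rip z 0 = 0.
Proof. by rewrite /rip ip0r. Qed.
Lemma ripBl x y z : rip (x - y) z = rip x z - rip y z.
Proof. by rewrite ripDl ripNl. Qed.
Lemma ripBr x y z : rip z (x - y) = rip z x - rip z y.
Proof. by rewrite ripDr ripNr. Qed.

Lemma Im_rip x y : complex.Im (ip x y) = rip x (iC *: y).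
Proof. by rewrite /rip ipZr; case: (ip x y) => a b /=; lra. Qed.

Lemma rip_ii x y : rip (iC *: x) (iC *: y) = rip x y.
Proof. by rewrite /rip ipZl ipZr; case: (ip x y) => a b /=; lra. Qed.

Lemma rip_il x y : rip (iC *: x) y = - rip x (iC *: y).
Proof. by rewrite /rip ipZl ipZr; case: (ip x y) => a b /=; lra. Qed.

Lemma ii (x : H) : iC *: (iC *: x) = - x.
Proof. by rewrite scalerA -expr2 sqr_i scaleN1r. Qed.

Lemma iZ (r : R) (x : H) : iC *: (r%:C *: x) = r%:C *: (iC *: x).
Proof. by rewrite !scalerA mulrC. Qed.

Lemma rip_ge0 x : 0 <= rip x x.
Proof. by case: hip => _ _ h _; case: (h x). Qed.

Lemma rip_xix x : rip x (iC *: x) = 0.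
Proof. by rewrite -Im_rip; case: hip => _ _ h _; case: (h x). Qed.

Lemma rip_eq0 x : rip x x = 0 -> x = 0.
Proof.
case: hip => _ _ h h0 e; apply: h0; case: (h x) => hi _.
move: e hi; rewrite /rip; case: (ip x x) => a b /= -> -> //.
Qed.

Lemma ip_eq0 x y : rip x y = 0 -> rip x (iC *: y) = 0 -> ip x y = 0.
Proof.
rewrite -Im_rip /rip; case: (ip x y) => a b /= -> -> //.
Qed.

Lemma hnorm_sym x y : hnorm ip (x - y) = hnorm ip (y - x).
Proof. by rewrite /hnorm -/(rip _ _) -/(rip _ _) -opprB ripNl ripNr opprK. Qed.

Lemma hnorm0 : hnorm ip 0 = 0.
Proof. by rewrite /hnorm -/(rip _ _) rip0l sqrtr0. Qed.


Lemma real0 : (0:R)%:C = 0 :> R[i]. Proof. by []. Qed.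
Lemma real1 : (1:R)%:C = 1 :> R[i]. Proof. by []. Qed.
Lemma realN1 : (-1:R)%:C = -1 :> R[i].
Proof. by apply/eqP; rewrite eq_complex /= oppr0 !eqxx. Qed.

Lemma realM (a b : R) : a%:C * b%:C = (a * b)%:C :> R[i].
Proof. by apply/eqP; rewrite eq_complex /= !mul0r mulr0 subr0 addr0 !eqxx. Qed.
Lemma realN (a : R) : (- a)%:C = - a%:C :> R[i].
Proof. by apply/eqP; rewrite eq_complex /= oppr0 !eqxx. Qed.

Lemma rs_N (E : set H) x : real_subspace E -> E x -> E (- x).
Proof. by case=> _ _ hZ /(hZ (-1)); rewrite realN1 scaleN1r. Qed.
Lemma rs_B (E : set H) x y : real_subspace E -> E x -> E y -> E (x - y).
Proof. by move=> hE hx hy; case: (hE) => _ hD _; apply: hD => //; apply: rs_N. Qed.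
Lemma rs_D (E : set H) x y : real_subspace E -> E x -> E y -> E (x + y).
Proof. by case=> _ hD _; apply: hD. Qed.
Lemma rs_Z (E : set H) (r : R) x : real_subspace E -> E x -> E (r%:C *: x).
Proof. by case=> _ _ hZ; apply: hZ. Qed.
Lemma rs_0 (E : set H) : real_subspace E -> E 0.
Proof. by case. Qed.

Definition fspan (f : nat -> H) (n : nat) : set H :=
  [set x | exists c : nat -> R, x = \sum_(i < n) (c i)%:C *: f i].

Lemma fspan_rs f n : real_subspace (fspan f n).
Proof.
split.
- by exists (fun _ => 0); rewrite big1 // => i _; rewrite real0 scale0r.
- move=> x y [c ->] [c' ->]; exists (fun i => c i + c' i).
  by rewrite -big_split; apply: eq_bigr => i _; rewrite rmorphD scalerDl.
- move=> r x [c ->]; exists (fun i => r * c i).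
  by rewrite scaler_sumr; apply: eq_bigr => i _; rewrite scalerA rmorphM.
Qed.

Lemma fspan0 f x : fspan f 0 x <-> x = 0.
Proof.
split; first by case=> c ->; rewrite big_ord0.
by move=> ->; apply: rs_0 (fspan_rs f 0).
Qed.

Lemma fspanS f n x :
  fspan f n.+1 x <-> exists y (r : R), fspan f n y /\ x = y + r%:C *: f n.
Proof.
split.
- by case=> c ->; rewrite big_ord_recr /=; exists (\sum_(i < n) (c i)%:C *: f i), (c n); split => //; exists c.
- case=> y [r [[c ->] ->]]; exists (fun i => if i == n then r else c i).
  rewrite big_ord_recr /= eqxx; congr (_ + _); apply: eq_bigr => i _.
  by rewrite ltn_eqF.
Qed.

Lemma fspan_min f n (Y : set H) : real_subspace Y ->
  (forall i, (i < n)%N -> Y (f i)) -> fspan f n `<=` Y.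
Proof.
move=> hY hf x [c ->]; apply: (big_ind Y).
- exact: rs_0.
- by move=> a b; apply: rs_D.
- by move=> i _; apply: rs_Z => //; apply: hf.
Qed.

Lemma fspan_f f n i : (i < n)%N -> fspan f n (f i).
Proof.
elim: n => // n IH; rewrite ltnS leq_eqVlt => /orP [/eqP -> | /IH hi].
- apply/fspanS; exists 0, 1; split; first exact: rs_0 (fspan_rs _ _).
  by rewrite add0r real1 scale1r.
- apply/fspanS; exists (f i), 0; split => //.
  by rewrite real0 scale0r addr0.
Qed.

Lemma fspan_le f n m : (n <= m)%N -> fspan f n `<=` fspan f m.
Proof.
move=> nm; apply: fspan_min; first exact: fspan_rs.
by move=> i hi; apply: fspan_f; apply: leq_trans nm.
Qed.

Definition is_proj (S : set H) (P : H -> H) :=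
  (forall x, S (P x)) /\ (forall x s, S s -> rip (x - P x) s = 0).

Lemma proj_ex f n : exists P, is_proj (fspan f n) P.
Proof.
elim: n => [|n [P [PS Po]]].
  exists (fun _ => 0); split; first by move=> x; apply/fspan0.
  by move=> x s /fspan0 ->; rewrite rip0r.
have hS := fspan_rs f n; have hS' := fspan_rs f n.+1.
have sub : fspan f n `<=` fspan f n.+1 by apply: fspan_le.
set w := f n - P (f n).
have hw : fspan f n.+1 w.
  by apply: rs_B => //; [apply: fspan_f | apply: sub].
have decomp : forall s, fspan f n.+1 s -> exists s1 (r : R), fspan f n s1 /\ s = s1 + r%:C *: w.
  move=> s /fspanS [y [r [hy ->]]]; exists (y + r%:C *: P (f n)), r; split.
    by apply: rs_D => //; apply: rs_Z.
  by rewrite /w scalerBr addrCA addrK addrC.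
have ow : forall s, fspan f n s -> rip w s = 0 by move=> s hs; apply: Po.
have owP : forall x, rip (P x) w = 0 by move=> x; rewrite ripC ow.
clearbody w.
have [w0|wn0] := eqVneq (rip w w) 0.
  have w00 := rip_eq0 w0.
  exists P; split; first by move=> x; apply: sub.
  move=> x s /decomp [s1 [r [hs1 ->]]]; rewrite w00 scaler0 addr0; exact: Po.
exists (fun x => P x + (rip x w / rip w w)%:C *: w); split.
  by move=> x; apply: rs_D => //; [apply: sub | apply: rs_Z].
move=> x s /decomp [s1 [r [hs1 ->]]].
have h1 := Po x s1 hs1; rewrite ripBl in h1.
have e1 : rip x s1 = rip (P x) s1 by apply/eqP; rewrite -subr_eq0 h1.
rewrite opprD addrA !ripDl !ripDr !ripNl !ripZl !ripZr owP (ow s1 hs1) e1.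
by field.
Qed.

Lemma proj_closed S P : real_subspace S -> is_proj S P -> hclosed ip S.
Proof.
move=> hS [PS Po] u x hu hc.
suff -> : x = P x by [].
apply/eqP; rewrite -subr_eq0; apply/eqP; apply: rip_eq0.
set v := x - P x; apply/eqP; apply: contraT => hv.
have dpos : 0 < rip v v by rewrite lt_def hv rip_ge0.
have hpos : 0 < Num.sqrt (rip v v) by rewrite sqrtr_gt0.
have [N hN] := hc _ hpos.
have := hN N (leqnn N); rewrite /hnorm -/(rip _ _).
have -> : u N - x = (u N - P x) - v by rewrite /v opprB addrA subrK.
have ha : S (u N - P x) by apply: rs_B.
have hva : rip v (u N - P x) = 0 by apply: Po.
set a := u N - P x in ha hva *.
have hle : rip v v <= rip (a - v) (a - v).
  clearbody a v; rewrite !ripBl !ripBr (ripC a v) hva.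
  have := rip_ge0 a; lra.
by move=> hlt; have := le_lt_trans (ler_wsqrtr hle) hlt; rewrite ltxx.
Qed.

Lemma hclosure_sub (E : set H) : E `<=` hclosure ip E.
Proof. by move=> x hx e he; exists x; split => //; rewrite subrr hnorm0. Qed.

Lemma hclosure_closed (E : set H) : hclosed ip E -> hclosure ip E `<=` E.
Proof.
move=> hE x hx.
have /choice [y hy] : forall k : nat, exists y, E y /\ hnorm ip (x - y) < (k.+1%:R)^-1.
  by move=> k; apply: hx; rewrite invr_gt0 ltr0Sn.
apply: (hE y) => [k|e he]; first by case: (hy k).
have hei : 0 <= e^-1 by rewrite invr_ge0 ltW.
have hb := archi_boundP hei; exists (Num.Def.archi_bound e^-1) => n hn.
rewrite hnorm_sym; apply: lt_trans (hy n).2 _.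
rewrite invf_plt ?posrE ?ltr0Sn //; apply: lt_le_trans hb _.
by rewrite ler_nat; apply: leqW.
Qed.


Lemma fspan_closed f n : closed_real_subspace ip (fspan f n).
Proof.
have [P hP] := proj_ex f n; split; first exact: fspan_rs.
exact: proj_closed (fspan_rs f n) hP.
Qed.

Lemma closure_closed (E : set H) : hclosed ip E -> hclosure ip E = E.
Proof. by move=> hE; apply/seteqP; split; [apply: hclosure_closed | apply: hclosure_sub]. Qed.

Lemma real_span_min (X Y : set H) : real_subspace Y -> X `<=` Y -> real_span X `<=` Y.
Proof.
move=> hY XY x [n [c [v [hv ->]]]]; apply: (big_ind Y).
- exact: rs_0.
- by move=> a b; apply: rs_D.
- by move=> i _; apply: rs_Z => //; apply: XY.
Qed.

Lemma real_span_add (X : set H) a b : X a -> X b -> real_span X (a + b).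
Proof.
move=> ha hb; exists 2, (fun _ => 1), (fun i : 'I_2 => if val i == 0%N then a else b).
split; first by move=> i; case: ifP.
by rewrite !big_ord_recr big_ord0 /= real1 !scale1r add0r.
Qed.

Lemma pjoin2 (A B T : set H) : closed_real_subspace ip T -> A `<=` T -> B `<=` T ->
  (forall t, T t -> exists a b, [/\ A a, B b & t = a + b]) ->
  pjoin ip ([set A] `|` [set B]) = T.
Proof.
move=> [hT hTc] AT BT hdec; rewrite /pjoin.
suff -> : real_span (\bigcup_(E in [set A] `|` [set B]) E) = T by apply: closure_closed.
apply/seteqP; split.
  apply: real_span_min => // x [E [->|->]] //; [apply: AT | apply: BT].
move=> t /hdec [a [b [ha hb ->]]]; apply: real_span_add.
  by exists A => //; left.
by exists B => //; right.
Qed.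

Lemma sep_sym (A B : set H) : Defs.separated ip A B -> Defs.separated ip B A.
Proof.
move=> hAB x hx h hh; have := hAB h hh x hx.
by rewrite (ipJ h x); case: (ip h x) => a b /= ->; rewrite oppr0.
Qed.

Lemma mu_two (mu : set H -> R) (A B : set H) : fin_add_prob_measure ip mu ->
  closed_real_subspace ip A -> closed_real_subspace ip B -> A <> B ->
  Defs.separated ip A B ->
  mu (pjoin ip ([set A] `|` [set B])) = mu A + mu B.
Proof.
case=> h1 _ _ _ h5 hA hB AB sAB.
have hQ : ([set A] `|` [set B]) `<=` (closed_real_subspace ip) by move=> E [->|->].
have hfin : finite_set ([set A] `|` [set B]).
  by rewrite finite_setU; split; apply: finite_set1.
have hsep : pairwise_separated ip ([set A] `|` [set B]).
  move=> E F [->|->] [->|->] // _.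
  exact: sep_sym.
have := h5 _ hQ hfin hsep; rewrite esum_fset //; last first.
  by move=> E; rewrite inE => /hQ /h1 /andP [h _]; rewrite lee_fin.
rewrite fsbigU ?finite_set1 //; last by move=> E [] /= EA EB; case: AB; rewrite -EA.
by rewrite !fsbig_set1 /= -EFinD; case.
Qed.

Lemma prob_fin (mu : set H -> R) : prob_measure ip mu -> fin_add_prob_measure ip mu.
Proof.
case=> h1 h2 h3 h4 h5; split => // Q hQ hfin; apply: h5 => //.
exact: finite_set_countable.
Qed.


Definition spanL (s : seq H) := fspan (nth 0 s) (size s).

Lemma spanL1P a x : spanL [:: a] x <-> exists c : R, x = c%:C *: a.
Proof.
rewrite /spanL; split.
- move=> /fspanS [y1 [r1 [/fspan0 -> ->]]]; exists r1; by rewrite add0r.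
- move=> [c1 ->]; apply/fspanS; exists 0, c1; split; [by apply/fspan0 | by rewrite add0r].
Qed.

Lemma spanL2P a b x : spanL [:: a; b] x <->
  exists c1 c2 : R, x = c1%:C *: a + c2%:C *: b.
Proof.
rewrite /spanL; split.
- move=> /fspanS [y2 [r2 [/fspanS [y1 [r1 [/fspan0 -> ->]]] ->]]].
  by exists r1, r2; rewrite add0r.
- move=> [c1 [c2 ->]]; apply/fspanS; exists (c1%:C *: a), c2; split => //.
  apply/fspanS; exists 0, c1; split; [by apply/fspan0 | by rewrite add0r].
Qed.

Lemma spanL3P a b c x : spanL [:: a; b; c] x <->
  exists c1 c2 c3 : R, x = c1%:C *: a + c2%:C *: b + c3%:C *: c.
Proof.
rewrite /spanL; split.
- move=> /fspanS [y3 [r3 [/fspanS [y2 [r2 [/fspanS [y1 [r1 [/fspan0 -> ->]]] ->]]] ->]]].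
  by exists r1, r2, r3; rewrite add0r.
- move=> [c1 [c2 [c3 ->]]]; apply/fspanS; exists (c1%:C *: a + c2%:C *: b), c3; split => //.
  apply/fspanS; exists (c1%:C *: a), c2; split => //.
  apply/fspanS; exists 0, c1; split; [by apply/fspan0 | by rewrite add0r].
Qed.

Lemma spanL_rs s : real_subspace (spanL s). Proof. exact: fspan_rs. Qed.
Lemma spanL_closed s : closed_real_subspace ip (spanL s). Proof. exact: fspan_closed. Qed.
Lemma spanL_gen s i : (i < size s)%N -> spanL s (nth 0 s i). Proof. exact: fspan_f. Qed.
Lemma spanL_min s (Y : set H) : real_subspace Y ->
  (forall i, (i < size s)%N -> Y (nth 0 s i)) -> spanL s `<=` Y.
Proof. exact: fspan_min. Qed.

Definition line x := spanL [:: x; iC *: x].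

Lemma symp_rs (E : set H) : real_subspace (symp_compl ip E).
Proof.
split.
- by move=> h _; rewrite ip0l.
- by move=> x y hx hy h hh; rewrite !Im_rip ripDl -!Im_rip hx ?hy ?addr0.
- by move=> r x hx h hh; rewrite Im_rip ripZl -Im_rip hx ?mulr0.
Qed.

Lemma orth_rs g : real_subspace [set h | rip g (iC *: h) = 0].
Proof.
split => /=.
- by rewrite scaler0 rip0r.
- by move=> x y hx hy; rewrite scalerDr ripDr hx hy addr0.
- by move=> r x hx; rewrite iZ ripZr hx mulr0.
Qed.

Lemma sep_gen (s t : seq H) :
  (forall i j, (i < size s)%N -> (j < size t)%N ->
     rip (nth 0 s i) (iC *: nth 0 t j) = 0) ->
  Defs.separated ip (spanL s) (spanL t).
Proof.
move=> hst; apply: spanL_min; first exact: symp_rs.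
move=> i hi h hh; rewrite Im_rip.
suff : [set h | rip (nth 0 s i) (iC *: h) = 0] h by [].
by move: h hh; apply: spanL_min; [apply: orth_rs | move=> j hj; apply: hst].
Qed.


Lemma shear (mu : set H -> R) a1 a2 b1 b2 r : fin_add_prob_measure ip mu ->
  rip a1 (iC *: r) = 0 -> rip a2 (iC *: r) = 0 ->
  rip b1 (iC *: r) = 0 -> rip b2 (iC *: r) = 0 ->
  rip a1 (iC *: a2) != 0 -> rip b1 (iC *: b2) != 0 ->
  spanL [:: a1; a2; r] b1 -> spanL [:: a1; a2; r] b2 ->
  spanL [:: b1; b2; r] a1 -> spanL [:: b1; b2; r] a2 ->
  mu (spanL [:: a1; a2]) = mu (spanL [:: b1; b2]).
Proof.
move=> hmu ha1 ha2 hb1 hb2 ha hb mb1 mb2 ma1 ma2.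
have key : forall c1 c2, rip c1 (iC *: r) = 0 -> rip c2 (iC *: r) = 0 ->
    rip c1 (iC *: c2) != 0 ->
    mu (pjoin ip ([set spanL [:: c1; c2]] `|` [set spanL [:: r]])) =
    mu (spanL [:: c1; c2]) + mu (spanL [:: r]).
  move=> c1 c2 h1 h2 h12; apply: mu_two => //; try apply: spanL_closed.
  - move=> E.
    have : spanL [:: r] c1 by rewrite -E; apply: (@spanL_gen [:: c1; c2] 0).
    have : spanL [:: r] c2 by rewrite -E; apply: (@spanL_gen [:: c1; c2] 1).
    move=> /spanL1P [k2 e2] /spanL1P [k1 e1]; move: h12.
    by rewrite e1 e2 iZ ripZl ripZr rip_xix !mulr0 eqxx.
  - apply: sep_gen => i j hi hj.
    by case: i hi => [|[|]] //= _; case: j hj => //= _.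
have join : forall c1 c2, spanL [:: c1; c2; r] =
    pjoin ip ([set spanL [:: c1; c2]] `|` [set spanL [:: r]]).
  move=> c1 c2; symmetry; apply: pjoin2; first exact: spanL_closed.
  - apply: spanL_min; first exact: spanL_rs.
    move=> [|[|]] //= _; [exact: (@spanL_gen [:: c1; c2; r] 0) | exact: (@spanL_gen [:: c1; c2; r] 1)].
  - apply: spanL_min; first exact: spanL_rs.
    move=> [|] //= _; exact: (@spanL_gen [:: c1; c2; r] 2).
  - move=> t /spanL3P [k1 [k2 [k3 ->]]]; exists (k1%:C *: c1 + k2%:C *: c2), (k3%:C *: r).
    by split => //; [apply/spanL2P; exists k1, k2 | apply/spanL1P; exists k3].
have eqT : spanL [:: a1; a2; r] = spanL [:: b1; b2; r].
  apply/seteqP; split; apply: spanL_min; try exact: spanL_rs.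
  - by move=> [|[|[|]]] //= _; exact: (@spanL_gen [:: b1; b2; r] 2).
  - by move=> [|[|[|]]] //= _; exact: (@spanL_gen [:: a1; a2; r] 2).
have := key a1 a2 ha1 ha2 ha; have := key b1 b2 hb1 hb2 hb.
rewrite -!join eqT => ->; lra.
Qed.


Lemma rip_pos x : x != 0 -> 0 < rip x x.
Proof.
move=> hx; rewrite lt_def rip_ge0 andbT; apply/eqP => /rip_eq0 h.
by rewrite h eqxx in hx.
Qed.

Lemma line_eq (mu : set H -> R) xi eta : fin_add_prob_measure ip mu ->
  ip xi eta = 0 -> xi != 0 -> eta != 0 -> mu (line xi) = mu (line eta).
Proof.
move=> hmu o xn en.
have o' : ip eta xi = 0 by rewrite ipJ o conjc0.
have t1 : rip xi eta = 0 by rewrite /rip o.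
have t2 : rip xi (iC *: eta) = 0 by rewrite -Im_rip o.
have t3 : rip eta xi = 0 by rewrite /rip o'.
have t4 : rip eta (iC *: xi) = 0 by rewrite -Im_rip o'.
have t5 := rip_xix xi; have t6 := rip_xix eta.
have ha := rip_pos xn; have hb := rip_pos en.
have [t [tn0 tb]] : exists t : R, t != 0 /\ t * rip eta eta = rip xi xi.
  exists (rip xi xi / rip eta eta); split; first by rewrite mulf_neq0 // ?invr_eq0 gt_eqF.
  by rewrite mulfVK // gt_eqF.
Ltac nrm := do 2 rewrite ?scalerDr ?scalerBr ?scalerN ?iZ ?ii ?ripDl ?ripDr ?ripBl ?ripBr
  ?ripNl ?ripNr ?ripZl ?ripZr ?rip_ii ?rip_il ?ii ?ripNr ?ripNl.
rewrite /line.
transitivity (mu (spanL [:: xi + eta; iC *: xi])).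
  apply: (@shear mu _ _ _ _ eta) => //; nrm; rewrite ?t1 ?t2 ?t3 ?t4 ?t5 ?t6 ?addr0 //;
    try (apply/eqP => h; clear -h ha hb tb; lra).
  - by apply/spanL3P; exists 1, 0, 1; rewrite real1 real0 !scale1r scale0r addr0.
  - exact: (@spanL_gen [:: _; _; _] 1).
  - by apply/spanL3P; exists 1, 0, (-1); rewrite real1 real0 realN1 scale1r scale0r addr0 scaleN1r addrK.
  - exact: (@spanL_gen [:: _; _; _] 1).
transitivity (mu (spanL [:: xi + eta; iC *: eta])).
  apply: (@shear mu _ _ _ _ (iC *: xi - t%:C *: (iC *: eta))) => //; nrm;
    rewrite ?t1 ?t2 ?t3 ?t4 ?t5 ?t6 ?addr0 ?oppr0 ?mulr0 ?subr0 //;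
    try (apply/eqP => h; clear -h ha hb tb; lra);
    try (clear -tb ha hb; rewrite ?mulrN ?opprK ?tb; lra).
  - exact: (@spanL_gen [:: _; _; _] 0).
  - apply/spanL3P; exists 0, t^-1, (- t^-1); rewrite real0 scale0r add0r.
    rewrite scalerBr [X in _ - X]scalerA realM mulNr mulVf // realN1 scaleN1r.
    by rewrite realN scaleNr opprK addrA subrr add0r.
  - exact: (@spanL_gen [:: _; _; _] 0).
  - apply/spanL3P; exists 0, t, 1; rewrite real0 scale0r add0r real1 scale1r.
    by rewrite addrC subrK.
transitivity (mu (spanL [:: eta; iC *: eta])); last by [].
apply: (@shear mu _ _ _ _ xi) => //; nrm;
  rewrite ?t1 ?t2 ?t3 ?t4 ?t5 ?t6 ?addr0 ?oppr0 ?mulr0 ?subr0 //;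
  try (apply/eqP => h; clear -h ha hb tb; lra);
  try (clear -tb ha hb; rewrite ?mulrN ?opprK ?tb; lra).
- by apply/spanL3P; exists 1, 0, (-1); rewrite real1 real0 realN1 scale1r scale0r addr0 scaleN1r addrAC subrr add0r.
- exact: (@spanL_gen [:: _; _; _] 1).
- by apply/spanL3P; exists 1, 0, 1; rewrite real1 real0 scale1r scale0r addr0 scale1r addrC.
- exact: (@spanL_gen [:: _; _; _] 1).
Qed.


Definition gI (d : nat -> H) : nat -> H :=
  fun k => if odd k then iC *: d k./2 else d k./2.
Definition K d k := fspan (gI d) k.*2.

Lemma gI_even d k : gI d k.*2 = d k.
Proof. by rewrite /gI odd_double doubleK. Qed.
Lemma gI_odd d k : gI d (k.*2).+1 = iC *: d k.
Proof. by rewrite /gI /= odd_double /= uphalf_double. Qed.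

Lemma KS d k x : K d k.+1 x <->
  exists y (r s : R), K d k y /\ x = y + r%:C *: d k + s%:C *: (iC *: d k).
Proof.
rewrite /K doubleS; split.
- move=> /fspanS [y2 [s [/fspanS [y [r [hy ->]]] ->]]].
  by exists y, r, s; rewrite gI_even gI_odd.
- move=> [y [r [s [hy ->]]]]; apply/fspanS; exists (y + r%:C *: d k), s.
  rewrite gI_odd; split => //; apply/fspanS; exists y, r; by rewrite gI_even.
Qed.

Lemma K0 d x : K d 0 x <-> x = 0.
Proof. exact: fspan0. Qed.

Lemma K_rs d k : real_subspace (K d k). Proof. exact: fspan_rs. Qed.
Lemma K_closed d k : closed_real_subspace ip (K d k). Proof. exact: fspan_closed. Qed.

Lemma K_i d k x : K d k x -> K d k (iC *: x).
Proof.
elim: k x => [|k IH] x.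
  by move=> /K0 ->; rewrite scaler0; apply/K0.
move=> /KS [y [r [s [hy ->]]]]; apply/KS.
exists (iC *: y), (- s), r; split; first exact: IH.
rewrite !scalerDr !iZ ii realN scaleNr scalerN.
by rewrite -addrA [X in _ + X]addrC addrA.
Qed.

Lemma K_mono d k l : (k <= l)%N -> K d k `<=` K d l.
Proof. by move=> kl; apply: fspan_le; rewrite leq_double. Qed.

Lemma dK d j k : (j < k)%N -> K d k (d j).
Proof. by move=> jk; rewrite -gI_even; apply: fspan_f; rewrite ltn_double. Qed.

Definition projK d k : H -> H := projT1 (cid (proj_ex (gI d) k.*2)).
Lemma projK_spec d k : is_proj (K d k) (projK d k).
Proof. exact: (projT2 (cid (proj_ex (gI d) k.*2))). Qed.

Definition wK d k := d k - projK d k (d k).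

Lemma wK_orth d k s : K d k s -> ip (wK d k) s = 0.
Proof.
have [_ Po] := projK_spec d k.
move=> hs; apply: ip_eq0; apply: Po => //; exact: K_i.
Qed.

Lemma wK_in d k : K d k.+1 (wK d k).
Proof.
have [PS _] := projK_spec d k.
apply: rs_B; first exact: K_rs.
  exact: dK.
exact: (K_mono (leqnSn k)).
Qed.

Lemma wK_orth2 d j k : (j < k)%N -> ip (wK d k) (wK d j) = 0.
Proof. by move=> jk; apply: wK_orth; apply: (K_mono jk); apply: wK_in. Qed.

Lemma wK_dec d k x : K d k.+1 x -> exists y (r s : R),
  K d k y /\ x = y + (r%:C *: wK d k + s%:C *: (iC *: wK d k)).
Proof.
have [PS _] := projK_spec d k.
move=> /KS [y [r [s [hy ->]]]].
set p := projK d k (d k).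
exists (y + r%:C *: p + s%:C *: (iC *: p)), r, s; split.
  have hK := K_rs d k; have hp : K d k p by apply: PS.
  apply: (rs_D hK); first by apply: (rs_D hK) => //; apply: (rs_Z _ hK).
  by apply: (rs_Z _ hK); apply: K_i.
by rewrite /wK -/p !scalerBr; apply: zid.
Qed.

Lemma line0 : line 0 = [set 0].
Proof.
apply/seteqP; split => x.
  by move=> /spanL2P [c1 [c2 ->]]; rewrite scaler0 !scaler0 addr0.
by move=> ->; apply: rs_0; apply: spanL_rs.
Qed.

Lemma line_orth x w h : ip x w = 0 -> line w h -> ip x h = 0.
Proof.
move=> o /spanL2P [c1 [c2 ->]].
by rewrite ipDr !ipZr o !mulr0 addr0.
Qed.

Lemma K_join d k : wK d k != 0 ->
  pjoin ip ([set K d k] `|` [set line (wK d k)]) = K d k.+1.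
Proof.
move=> wn; apply: pjoin2; first exact: K_closed.
- exact: K_mono.
- apply: spanL_min; first exact: K_rs.
  by move=> [|[|]] //= _; [exact: wK_in | apply: K_i; exact: wK_in].
- move=> t /wK_dec [y [r [s [hy ->]]]]; exists y, (r%:C *: wK d k + s%:C *: (iC *: wK d k)).
  by split => //; apply/spanL2P; exists r, s.
Qed.

Lemma mu_K (mu : set H -> R) d k : fin_add_prob_measure ip mu ->
  mu (K d k.+1) = mu (K d k) + mu (line (wK d k)).
Proof.
move=> hmu; have [w0|wn] := eqVneq (wK d k) 0.
  have -> : K d k.+1 = K d k.
    apply/seteqP; split; last exact: K_mono.
    by move=> x /wK_dec [y [r [s [hy ->]]]]; rewrite w0 !scaler0 !addr0.
  by rewrite w0 line0; case: hmu => _ -> _ _ _; rewrite addr0.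
rewrite -(K_join wn); apply: mu_two => //.
- exact: K_closed.
- exact: spanL_closed.
- move=> E; have : K d k (wK d k) by rewrite E; exact: (@spanL_gen [:: _; _] 0).
  move=> /wK_orth hw; move/eqP: wn; apply; apply: rip_eq0; by rewrite /rip hw.
- move=> x hx h hh; have ox : ip x (wK d k) = 0 by rewrite ipJ wK_orth // conjc0.
  by rewrite (line_orth ox hh).
Qed.

Lemma mu_K_sum (mu : set H -> R) d k : fin_add_prob_measure ip mu ->
  mu (K d k) = \sum_(j < k) mu (line (wK d j)).
Proof.
move=> hmu; elim: k => [|k IH].
  have -> : K d 0 = [set 0] by apply/seteqP; split => x /K0.
  by rewrite big_ord0; case: hmu => _ -> _ _ _.
by rewrite big_ord_recr /= -IH mu_K.
Qed.


Definition Vset N (u : 'I_N -> H) (j : nat) : set H :=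
  [set x | exists c : 'I_N -> R[i], x = \sum_i c i *: u i /\
     forall i : 'I_N, (j <= i)%N -> c i = 0].

Lemma Vset_rs N (u : 'I_N -> H) j : real_subspace (Vset u j).
Proof.
split.
- by exists (fun _ => 0); split => //; rewrite big1 // => i _; rewrite scale0r.
- move=> x y [c [-> hc]] [c' [-> hc']]; exists (fun i => c i + c' i); split.
    by rewrite -big_split; apply: eq_bigr => i _; rewrite scalerDl.
  by move=> i hi; rewrite hc ?hc' ?addr0.
- move=> r x [c [-> hc]]; exists (fun i => r%:C * c i); split.
    by rewrite scaler_sumr; apply: eq_bigr => i _; rewrite scalerA.
  by move=> i hi; rewrite hc ?mulr0.
Qed.

Lemma sum_delta N (u : 'I_N -> H) (k : 'I_N) (a : R[i]) :
  \sum_i (if i == k then a else 0) *: u i = a *: u k.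
Proof.
rewrite (bigD1 k) //= eqxx big1 ?addr0 // => i /negbTE ->; exact: scale0r.
Qed.

Lemma Vset_delta N (u : 'I_N -> H) j (k : 'I_N) a : (k < j)%N -> Vset u j (a *: u k).
Proof.
move=> kj; exists (fun i => if i == k then a else 0); split; first by rewrite sum_delta.
move=> i ji; case: eqP => // ik; move: kj; rewrite -ik ltnNge ji //.
Qed.

Lemma indep_wK n (u : 'I_n.+1 -> H) :
  (forall c : 'I_n.+1 -> R[i], \sum_(i < n.+1) c i *: u i = 0 -> forall i, c i = 0) ->
  forall j, (j < n.+1)%N -> wK (fun k => u (inord k)) j != 0.
Proof.
move=> hind j hj; apply/eqP => w0.
set d := fun k => u (inord k).
have hdj : K d j (d j).
  have [PS _] := projK_spec d j.
  have : d j = projK d j (d j) by apply/eqP; rewrite -subr_eq0; apply/eqP.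
  by move=> ->.
have : Vset u j (d j).
  move: hdj; apply: fspan_min; first exact: Vset_rs.
  move=> l hl; have hl2 : (l./2 < j)%N.
    by rewrite -(ltn_double) (leq_ltn_trans _ hl) // -{2}(odd_double_half l) leq_addl.
  rewrite /gI /d; set k : 'I_n.+1 := inord l./2.
  have kv : (k : nat) = l./2 by rewrite inordK // (ltn_trans hl2).
  case: ifP => _; first by apply: Vset_delta; rewrite kv.
  by rewrite -[u k]scale1r; apply: Vset_delta; rewrite kv.
move=> [c [hc hz]].
have hs : \sum_(i < n.+1) (c i - (if i == inord j then 1 else 0)) *: u i = 0.
  under eq_bigr => i _ do rewrite scalerBl.
  by rewrite sumrB sum_delta -hc /d scale1r subrr.
have := hind _ hs (inord j); rewrite eqxx hz ?inordK // sub0r => /eqP.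
by rewrite oppr_eq0 oner_eq0.
Qed.


Lemma ip_self_neq0 x : x != 0 -> ip x x != 0.
Proof. by move=> /rip_pos; apply: contraTneq => h; rewrite /rip h ltxx. Qed.

Lemma wK_orthn d j k : j != k -> ip (wK d j) (wK d k) = 0.
Proof.
rewrite neq_ltn => /orP [jk|kj]; last exact: wK_orth2.
by rewrite ipJ wK_orth2 // conjc0.
Qed.

Lemma line_zero (mu : set H -> R) w : fin_add_prob_measure ip mu ->
  infinite_dimensional H -> mu (line w) = 0.
Proof.
move=> hmu hinf.
have [->|wn] := eqVneq w 0; first by rewrite line0; case: hmu => _ -> _ _ _.
have hN : forall N, (N.+3)%:R * mu (line w) <= 1.
  move=> N; have [u hu] := hinf N.+3.
  have wn0 := indep_wK hu.
  set d := fun k => u (inord k) in wn0.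
  have hw0 := wn0 0%N isT; have hw1 := wn0 1%N isT; have hw2 := wn0 2%N isT.
  have eq0 : mu (line w) = mu (line (wK d 0)).
    set w0 := wK d 0 in hw0 *; set w1 := wK d 1 in hw1 *; set w2 := wK d 2 in hw2 *.
    have o01 : ip w0 w1 = 0 by apply: wK_orthn.
    have o10 : ip w1 w0 = 0 by apply: wK_orthn.
    have o02 : ip w0 w2 = 0 by apply: wK_orthn.
    have o12 : ip w1 w2 = 0 by apply: wK_orthn.
    have o20 : ip w2 w0 = 0 by apply: wK_orthn.
    set a0 := ip w0 w; set a1 := ip w1 w.
    have [/andP [/eqP a00 /eqP a10]|hne] := boolP ((a0 == 0) && (a1 == 0)).
      by symmetry; apply: line_eq.
    set z := a1 *: w0 - a0 *: w1.
    have ozw : ip z w = 0 by rewrite /z ipDl ipNl !ipZl -/a0 -/a1 mulrC subrr.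
    have oz2 : ip z w2 = 0 by rewrite /z ipDl ipNl !ipZl o02 o12 !mulr0 subrr.
    have zn : z != 0.
      apply/eqP => z0; move: hne; rewrite negb_and.
      have [a1n|/negPn/eqP a10] := boolP (a1 != 0).
        have : ip z w0 = 0 by rewrite z0 ip0l.
        rewrite /z ipDl ipNl !ipZl o10 mulr0 subr0 => /eqP.
        by rewrite mulf_eq0 (negbTE a1n) (negbTE (ip_self_neq0 hw0)).
      rewrite orbF => a0n.
      have : ip z w1 = 0 by rewrite z0 ip0l.
      rewrite /z ipDl ipNl !ipZl o01 mulr0 add0r => /eqP.
      by rewrite oppr_eq0 mulf_eq0 (negbTE a0n) (negbTE (ip_self_neq0 hw1)).
    rewrite -(line_eq hmu ozw zn wn) (line_eq hmu oz2 zn hw2).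
    exact: line_eq.
  have eqj : forall j : 'I_N.+3, mu (line (wK d j)) = mu (line w).
    move=> [j hj] /=; rewrite eq0; case: j hj => // j hj.
    by apply: line_eq => //; [apply: wK_orthn | apply: wn0].
  have := mu_K_sum d N.+3 hmu.
  rewrite (eq_bigr _ (fun j _ => eqj j)) sumr_const card_ord => hK; rewrite mulr_natl -hK.
  by case: hmu => h1 _ _ _ _; have /andP [] := h1 _ (K_closed d N.+3).
have m0 : 0 <= mu (line w).
  by case: hmu => h1 _ _ _ _; have /andP [] := h1 _ (spanL_closed [:: w; iC *: w]).
apply/eqP; rewrite eq_le m0 andbT; apply/negP => /negP; rewrite -ltNge => mpos.
have mi : 0 <= (mu (line w))^-1 by rewrite invr_ge0 ltW.
have hb := archi_boundP mi.
move: (Num.Def.archi_bound _) hb => B hb.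
have := hN B; rewrite -[_^-1]mul1r ltr_pdivrMr // in hb.
rewrite -addn3 natrD mulrDl; lra.
Qed.


Lemma part_a (mu : set H -> R) S : fin_add_prob_measure ip mu ->
  infinite_dimensional H -> finite_dim_real_subspace S -> mu S = 0.
Proof.
move=> hmu hinf [n [v ->]].
pose d := fun k => if @insub nat (fun k => (k < n)%N) 'I_n k is Some i then v i else 0.
have dv : forall i : 'I_n, d i = v i by move=> i; rewrite /d valK.
have eqS : real_span (range v) = fspan d n.
  apply/seteqP; split.
    apply: real_span_min; first exact: fspan_rs.
    by move=> x [i _ <-]; rewrite -dv; apply: fspan_f.
  move=> x [c ->]; exists n, (fun i => c i), v; split; first by move=> i; exists i.
  by apply: eq_bigr => i _; rewrite dv.
have sub : real_span (range v) `<=` K d n.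
  apply: real_span_min; first exact: K_rs.
  by move=> x [i _ <-]; rewrite -dv; apply: dK.
case: (hmu) => h1 _ _ h4 _.
have hK : mu (K d n) = 0.
  rewrite (mu_K_sum _ _ hmu) big1 // => j _; exact: line_zero.
have hS : closed_real_subspace ip (real_span (range v)) by rewrite eqS; apply: fspan_closed.
have := h4 _ _ hS (K_closed d n) sub; rewrite hK => hle.
have /andP [h0 _] := h1 _ hS.
by apply/eqP; rewrite eq_le hle h0.
Qed.


Lemma K_sub d k : K d k `<=` K (wK d) k.
Proof.
elim: k => [|k IH] x.
  by move=> /K0 ->; apply/K0.
have [PS _] := projK_spec d k.
have hK := K_rs (wK d) k.+1.
have hp : K (wK d) k.+1 (projK d k (d k)) by apply: (K_mono (leqnSn k)); apply: IH.
have hw : K (wK d) k.+1 (wK d k) by apply: dK.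
have hdk : K (wK d) k.+1 (d k) by rewrite -[d k](subrK (projK d k (d k))); apply: rs_D.
move=> /KS [y [r [s [hy ->]]]].
apply: (rs_D hK); first apply: (rs_D hK).
- by apply: (K_mono (leqnSn k)); apply: IH.
- exact: rs_Z.
- by apply: rs_Z => //; apply: K_i.
Qed.

Lemma part_b (mu : set H -> R) : prob_measure ip mu ->
  infinite_dimensional H -> hseparable ip -> False.
Proof.
move=> hmu hinf [d hd].
have hfin := prob_fin hmu.
case: hmu => h1 h2 h3 h4 h5.
pose Q := range (fun k => line (wK d k)).
have hQ : Q `<=` closed_real_subspace ip by move=> E [k _ <-]; apply: spanL_closed.
have hc : countable Q.
  by apply: sub_countable (card_image_le _ _) _; apply: countableP.
have hsep : pairwise_separated ip Q.
  move=> E F [j _ <-] [k _ <-] EF.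
  have jk : j != k by apply/eqP => jk; apply: EF; rewrite jk.
  move=> x hx h hh.
  have o1 : ip (wK d k) x = 0 by apply: (line_orth _ hx); apply: wK_orthn; rewrite eq_sym.
  have o2 : ip x (wK d k) = 0 by rewrite ipJ o1 conjc0.
  by rewrite (line_orth o2 hh).
have := h5 Q hQ hc hsep.
rewrite esum1; last by move=> E [k _ <-]; rewrite line_zero.
have -> : pjoin ip Q = [set: H].
  apply/seteqP; split => // x _ e he.
  have [k hk] := hd x e he; exists (d k); split => //.
  have : K (wK d) k.+1 (d k) by apply: K_sub; apply: dK.
  move=> [c ->]; exists (k.+1).*2, (fun i => c i), (fun i => gI (wK d) i); split => //.
  move=> i; exists (line (wK d i./2)); first by exists i./2.
  rewrite /gI; case: ifP => _; [exact: (@spanL_gen [:: _; _] 1) | exact: (@spanL_gen [:: _; _] 0)].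
by rewrite h3; case => /eqP; rewrite oner_eq0.
Qed.

End Basics.


Unset Implicit Arguments.

Theorem theorem5p3 (R : realType) (H : lmodType R[i]) (ip : H -> H -> R[i]) :
  is_hilbert ip -> infinite_dimensional H ->
  (forall mu : set H -> R, fin_add_prob_measure ip mu ->
     forall S : set H, finite_dim_real_subspace S -> mu S = 0)
  /\ (hseparable ip -> ~ exists mu : set H -> R, prob_measure ip mu).
Proof.
move=> [hip _] hinf; split.
- by move=> mu hmu S hS; apply: (part_a hip hmu hinf hS).
- by move=> hsep [mu hmu]; apply: (part_b hip hmu hinf hsep).
Qed.
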